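(* Let $B>1$, $p>0$, $c_B>0$, and $\alpha\in\mathbb{R}$ with $4p+2-\alpha>0$. For integers $j$ let $N_j=c_BB^{2j}$ and $K_j^M(\alpha)=\frac1{N_j}\sum_{l\ge1}f_p^2(l/B^j)(2l+1)l^{-\alpha}$ with $f_p(x)=x^{2p}e^{-x^2}$, and let $$I_{p,s}(\alpha)=\frac{2}{c_B}\int_0^\infty t^{4p+1-\alpha}e^{-2t^2}(\log t)^s\,dt,\qquad s=0,1,2.$$ Then $I_{p,0}(\alpha)=\frac{2^{-(2p-\frac{\alpha}{2}+1)}}{c_B}\Gamma\big(2p+1-\frac{\alpha}{2}\big)$ and, as $j\to\infty$, $$K_j^M(\alpha)=\big(I_{p,0}(\alpha)+o(1)\big)B^{-\alpha j},$$ $$\frac{d}{d\alpha}K_j^M(\alpha)=-\Big(j\log B+\frac{I_{p,1}(\alpha)}{I_{p,0}(\alpha)}+o(1)\Big)K_j^M(\alpha),$$ $$\frac{d^2}{d\alpha^2}K_j^M(\alpha)=\Big(j^2\log^2B+2j\log B\,\frac{I_{p,1}(\alpha)}{I_{p,0}(\alpha)}+\frac{I_{p,2}(\alpha)}{I_{p,0}(\alpha)}+o(1)\Big)K_j^M(\alpha).$$ *)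

(* Defs.v *)
From Stdlib Require Import Reals.
From Coquelicot Require Import Coquelicot.
Open Scope R_scope.

Definition Gamma (x : R) : R :=
  RInt_gen (fun t => Rpower t (x - 1) * exp (- t)) (at_right 0) (Rbar_locally p_infty).

Definition fp (p x : R) : R := Rpower x (2 * p) * exp (- x ^ 2).

Definition Nj (B cB : R) (j : nat) : R := cB * B ^ (2 * j).

Definition KM (B p cB : R) (j : nat) (alpha : R) : R :=
  / Nj B cB j *
  Series (fun n : nat =>
    let l := INR (S n) in
    (fp p (l / B ^ j)) ^ 2 * (2 * l + 1) * Rpower l (- alpha)).

Definition Ips (p cB : R) (s : nat) (alpha : R) : R :=
  2 / cB *
  RInt_gen (fun t => Rpower t (4 * p + 1 - alpha) * exp (- 2 * t ^ 2) * (ln t) ^ s)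
    (at_right 0) (Rbar_locally p_infty).

(* Main.v *)
Require Import Defs.
From Stdlib Require Import Reals Lra Lia Psatz ZArith.
From Coquelicot Require Import Coquelicot.
Open Scope R_scope.

Lemma ln_le_sub1 y : 0 < y -> ln y <= y - 1.
Proof. intros H. pose proof (exp_ineq1_le (ln y)). rewrite exp_ln in H0; lra. Qed.

Lemma lt_exp z : z < exp z.
Proof. pose proof (exp_ineq1_le z). lra. Qed.

Lemma exp_le_mono x y : x <= y -> exp x <= exp y.
Proof. intros [H|H]. left; apply exp_increasing; auto. subst; lra. Qed.

Lemma exp_pow_n x n : exp x ^ n = exp (INR n * x).
Proof.
  induction n; simpl.
  - rewrite Rmult_0_l, exp_0; ring.
  - rewrite IHn, <- exp_plus. f_equal. destruct n; simpl; ring.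
Qed.

Lemma Rpower_pos x y : 0 < Rpower x y.
Proof. unfold Rpower; apply exp_pos. Qed.

Lemma pow_exp_ln t n : 0 < t -> t ^ n = exp (INR n * ln t).
Proof. intros Ht. rewrite <- Rpower_pow by auto. reflexivity. Qed.

Lemma Rpower_le_base_neg x y e : 0 < x -> x <= y -> e <= 0 -> Rpower y e <= Rpower x e.
Proof.
  intros Hx Hxy He. unfold Rpower. apply exp_le_mono.
  pose proof (ln_le x y Hx Hxy). nra.
Qed.

Lemma Rpower_small0 c : 0 < c -> forall eps, 0 < eps ->
  exists d, 0 < d /\ forall x, 0 < x -> x < d -> Rpower x c < eps.
Proof.
  intros Hc eps He. exists (exp (ln eps / c)). split. apply exp_pos.
  intros x Hx Hxd. unfold Rpower.
  apply ln_increasing in Hxd; auto. rewrite ln_exp in Hxd.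
  rewrite <- (exp_ln eps) by auto. apply exp_increasing.
  assert (E: c * (ln eps / c) = ln eps) by (field; lra).
  rewrite <- E. apply Rmult_lt_compat_l; auto.
Qed.

Lemma Rpower_smallinf c : c < 0 -> forall eps, 0 < eps ->
  exists M, 0 < M /\ forall y, M < y -> Rpower y c < eps.
Proof.
  intros Hc eps He. exists (exp (ln eps / c)). split. apply exp_pos.
  intros x Hxd. unfold Rpower. assert (Hx: 0 < x) by (pose proof (exp_pos (ln eps / c)); lra).
  apply ln_increasing in Hxd; [|apply exp_pos]. rewrite ln_exp in Hxd.
  rewrite <- (exp_ln eps) by auto. apply exp_increasing.
  assert (E: c * (ln eps / c) = ln eps) by (field; lra).
  rewrite <- E. nra.
Qed.

Lemma subA c m z : 0 < c -> 0 <= z -> exp (- c * z) * z ^ m <= ((INR m + 1) / c) ^ m.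
Proof.
  intros Hc Hz. set (e := c / (INR m + 1)).
  assert (Hm: 0 < INR m + 1) by (pose proof (pos_INR m); lra).
  assert (He: 0 < e) by (unfold e; apply Rdiv_lt_0_compat; lra).
  assert (H1: z <= exp (e * z) / e).
  { pose proof (lt_exp (e*z)). apply Rmult_le_reg_l with e; auto.
    field_simplify; lra. }
  assert (H2: z ^ m <= exp (INR m * (e * z)) / e ^ m).
  { rewrite <- exp_pow_n. unfold Rdiv. rewrite <- pow_inv, <- Rpow_mult_distr.
    apply pow_incr; split; auto. }
  assert (H3: exp (- c * z) * exp (INR m * (e * z)) <= 1).
  { rewrite <- exp_plus. rewrite <- exp_0. apply exp_le_mono.
    assert (INR m * e <= c).
    { unfold e. apply Rmult_le_reg_r with (INR m + 1); auto.
      field_simplify; lra. }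
    nra. }
  assert (Hpow: ((INR m + 1) / c) ^ m = / e ^ m).
  { rewrite <- pow_inv. f_equal. unfold e. field. lra. }
  rewrite Hpow.
  apply Rle_trans with (exp (- c * z) * (exp (INR m * (e * z)) / e ^ m)).
  apply Rmult_le_compat_l; auto. left; apply exp_pos.
  unfold Rdiv. rewrite <- Rmult_assoc.
  rewrite <- (Rmult_1_l (/ e ^ m)) at 2.
  apply Rmult_le_compat_r; auto. left; apply Rinv_0_lt_compat, pow_lt; auto.
Qed.

Lemma keybound c m n : 0 < c -> exists M, forall t, 0 < t ->
  Rpower t c * Rabs (ln t) ^ m * t ^ n * exp (- 2 * t ^ 2) <= M.
Proof.
  intros Hc. set (K := c + INR m + INR n).
  assert (HK: 0 <= K) by (unfold K; pose proof (pos_INR m); pose proof (pos_INR n); lra).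
  exists (((INR m + 1) / c) ^ m + exp (K^2/8)).
  intros t Ht.
  assert (P1: 0 < ((INR m + 1) / c) ^ m).
  { apply pow_lt. apply Rdiv_lt_0_compat; auto. pose proof (pos_INR m); lra. }
  pose proof (exp_pos (K^2/8)).
  rewrite (pow_exp_ln t n) by auto. unfold Rpower.
  destruct (Rle_or_lt (ln t) 0) as [Hl|Hl].
  - rewrite Rabs_left1 by auto.
    assert (A1: exp (INR n * ln t) <= 1) by (rewrite <- exp_0; apply exp_le_mono; pose proof (pos_INR n); nra).
    assert (A2: exp (- 2 * t ^ 2) <= 1) by (rewrite <- exp_0; apply exp_le_mono; nra).
    pose proof (subA c m (- ln t) Hc ltac:(lra)).
    replace (- c * - ln t) with (c * ln t) in H0 by ring.
    assert (0 <= exp (c * ln t) * (- ln t) ^ m).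
    { apply Rmult_le_pos. left; apply exp_pos. apply pow_le; lra. }
    assert (exp (c * ln t) * (- ln t) ^ m * exp (INR n * ln t) * exp (- 2 * t ^ 2)
       <= exp (c * ln t) * (- ln t) ^ m * 1 * 1).
    { pose proof (exp_pos (INR n * ln t)). pose proof (exp_pos (- 2 * t ^ 2)).
      apply Rmult_le_compat; try lra. apply Rmult_le_pos; lra.
      apply Rmult_le_compat_l; lra. }
    lra.
  - rewrite Rabs_right by lra.
    assert (B1: ln t ^ m <= exp (INR m * ln t)).
    { rewrite <- exp_pow_n. apply pow_incr. pose proof (lt_exp (ln t)); lra. }
    assert (B2: ln t <= t) by (pose proof (ln_le_sub1 t Ht); lra).
    assert (B3: exp (c * ln t) * ln t ^ m * exp (INR n * ln t) * exp (- 2 * t ^ 2)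
      <= exp (c * ln t) * exp (INR m * ln t) * exp (INR n * ln t) * exp (- 2 * t ^ 2)).
    { repeat apply Rmult_le_compat_r; try (left; apply exp_pos).
      apply Rmult_le_compat_l; auto. left; apply exp_pos. }
    rewrite <- !exp_plus in B3.
    assert (exp (c * ln t + INR m * ln t + INR n * ln t + - 2 * t ^ 2) <= exp (K^2/8)).
    { apply exp_le_mono. replace (c * ln t + INR m * ln t + INR n * ln t) with (K * ln t) by (unfold K; ring).
      assert (K * ln t <= K * t) by (apply Rmult_le_compat_l; auto). pose proof (pow2_ge_0 (t - K/4)). nra. }
    lra.
Qed.

Ltac contR := match goal with |- continuous ?g ?t => apply (ex_derive_continuous g) end.

Lemma is_derive_Rpower e t : 0 < t -> is_derive (fun t => Rpower t e) t (e * Rpower t (e - 1)).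
Proof. intros; apply is_derive_Reals, derivable_pt_lim_power; auto. Qed.

Lemma cont_Rpower e t : 0 < t -> continuous (fun t => Rpower t e) t.
Proof. intros. contR. eexists. apply is_derive_Rpower; auto. Qed.

Lemma cont_ex_RInt (f : R -> R) x y : (forall t, 0 < t -> continuous f t) -> 0 < x -> x <= y -> ex_RInt f x y.
Proof. intros Hf Hx Hxy. apply (ex_RInt_continuous (V:=R_CompleteNormedModule)). intros z Hz. apply Hf. rewrite Rmin_left in Hz; lra. Qed.

Lemma RInt_pow_bound f C e x y : (forall t, 0 < t -> continuous f t) -> 0 < x -> x <= y -> e + 1 <> 0 ->
  (forall t, x <= t <= y -> Rabs (f t) <= C * Rpower t e) ->
  Rabs (RInt f x y) <= C * (Rpower y (e+1) - Rpower x (e+1)) / (e+1).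
Proof.
  intros Hf Hx Hxy He Hb.
  eapply Rle_trans. apply abs_RInt_le; auto. apply cont_ex_RInt; auto.
  assert (HI: is_RInt (fun t => C * Rpower t e) x y (C * (Rpower y (e+1) - Rpower x (e+1)) / (e+1))).
  { set (F := fun t => C / (e+1) * Rpower t (e+1)).
    replace (C * (Rpower y (e + 1) - Rpower x (e + 1)) / (e + 1)) with (minus (F y) (F x))
      by (unfold F, minus, plus, opp; simpl; field; auto).
    apply (is_RInt_derive (V:=R_CompleteNormedModule)).
    - intros t Ht. rewrite Rmin_left, Rmax_right in Ht by lra. unfold F.
      replace (C * Rpower t e) with (C / (e+1) * ((e+1) * Rpower t (e+1-1))).
      apply is_derive_scal, is_derive_Rpower; lra.
      replace (e+1-1) with e by ring. field; auto.
    - intros t Ht. rewrite Rmin_left, Rmax_right in Ht by lra.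
      contR. unfold Rpower. auto_derive. lra. }
  rewrite <- (is_RInt_unique _ _ _ _ HI).
  apply RInt_le; auto.
  - apply cont_ex_RInt; auto. intros t Ht. apply continuous_Rabs_comp; auto.
  - eexists; eauto.
  - intros t Ht. apply Hb; lra.
Qed.

Lemma ball_R (x y e : R) : ball x e y <-> Rabs (y - x) < e.
Proof. unfold ball; simpl; unfold AbsRing_ball, abs, minus, plus, opp; simpl. tauto. Qed.

Lemma approx_gen (f : R -> R) l : (forall t, 0 < t -> continuous f t) ->
  (forall eps, 0 < eps -> exists d, 0 < d /\ exists M, forall x y, 0 < x -> x < d -> M < y ->
     Rabs (RInt f x y - l) < eps) ->
  is_RInt_gen f (at_right 0) (Rbar_locally p_infty) l.
Proof.
  intros Hf Ha P [eps HP].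
  destruct (Ha eps (cond_pos eps)) as [d [Hd [M HM]]].
  unfold filtermapi.
  apply Filter_prod with (Q := fun x => 0 < x < d) (R := fun y => Rmax M d < y).
  - exists (mkposreal d Hd). intros u Hu Hpos. split; auto.
    pose proof (proj1 (ball_R _ _ _) Hu) as Hu2. simpl in Hu2. rewrite Rminus_0_r, Rabs_right in Hu2; lra.
  - exists (Rmax M d). auto.
  - intros x y [Hx1 Hx2] Hy. simpl.
    pose proof (Rmax_l M d). pose proof (Rmax_r M d).
    exists (RInt f x y). split.
    apply (RInt_correct (V:=R_CompleteNormedModule)). apply cont_ex_RInt; auto. lra.
    apply HP. apply ball_R. apply HM; lra.
Qed.

Lemma gen_approx (f : R -> R) l :
  is_RInt_gen f (at_right 0) (Rbar_locally p_infty) l ->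
  forall eps, 0 < eps -> exists d, 0 < d /\ exists M, forall x y, 0 < x -> x < d -> M < y ->
     Rabs (RInt f x y - l) < eps.
Proof.
  intros H eps He.
  specialize (H (ball l (mkposreal eps He)) (locally_ball l _)).
  destruct H as [Q R' HQ HR HQR].
  destruct HQ as [d Hd]. destruct HR as [M HM].
  exists d. split. apply cond_pos. exists M. intros x y Hx Hxd Hy.
  destruct (HQR x y) as [v [Hv Hb]].
  - apply Hd; auto. apply ball_R. rewrite Rminus_0_r, Rabs_right; lra.
  - apply HM; auto.
  - simpl in Hv. rewrite (is_RInt_unique _ _ _ _ Hv). apply ball_R in Hb. exact Hb.
Qed.

Definition goodf (f : R -> R) (C b : R) :=
  (forall t, 0 < t -> continuous f t) /\ (forall t, 0 < t -> Rabs (f t) <= C * Rpower t b) /\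
  (forall t, 0 < t -> Rabs (f t) <= C * Rpower t (b - 1)).

Lemma tail0 f C b x y : goodf f C b -> -1 < b < 0 -> 0 <= C -> 0 < x -> x <= y ->
  Rabs (RInt f x y) <= C * Rpower y (b+1) / (b+1).
Proof.
  intros [Hc [H1 H2]] Hb HC Hx Hxy.
  eapply Rle_trans. { apply (RInt_pow_bound f C b x y Hc Hx Hxy); [lra| intros t Ht; apply H1; lra]. }
  pose proof (Rpower_pos x (b+1)). unfold Rdiv.
  apply Rmult_le_compat_r. left; apply Rinv_0_lt_compat; lra. nra.
Qed.

Lemma tailinf f C b x y : goodf f C b -> -1 < b < 0 -> 0 <= C -> 0 < x -> x <= y ->
  Rabs (RInt f x y) <= C * Rpower x b / (- b).
Proof.
  intros [Hc [H1 H2]] Hb HC Hx Hxy.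
  eapply Rle_trans. { apply (RInt_pow_bound f C (b-1) x y Hc Hx Hxy); [lra| intros t Ht; apply H2; lra]. }
  replace (b - 1 + 1) with b by ring.
  pose proof (Rpower_pos y b).
  replace (C * (Rpower y b - Rpower x b) / b) with ((C * Rpower x b - C * Rpower y b) / (- b)) by (field; lra).
  unfold Rdiv. apply Rmult_le_compat_r. left; apply Rinv_0_lt_compat; lra. nra.
Qed.

Lemma T0_small C b : -1 < b -> 0 <= C -> forall eps, 0 < eps ->
  exists d, 0 < d /\ forall x, 0 < x -> x < d -> C * Rpower x (b+1) / (b+1) < eps.
Proof.
  intros Hb HC eps He.
  destruct (Rpower_small0 (b+1) ltac:(lra) (eps * (b+1) / (C+1))) as [d [Hd Hx]].
  { apply Rdiv_lt_0_compat; nra. }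
  exists d; split; auto. intros x Hx0 Hxd. specialize (Hx x Hx0 Hxd).
  pose proof (Rpower_pos x (b+1)).
  apply Rmult_lt_compat_r with (r := (C+1)) in Hx; [|lra].
  unfold Rdiv in Hx. rewrite Rmult_assoc, Rinv_l, Rmult_1_r in Hx by lra.
  apply Rmult_lt_reg_r with (b+1). lra. unfold Rdiv. rewrite Rmult_assoc, Rinv_l, Rmult_1_r by lra.
  nra.
Qed.

Lemma Ti_small C b : b < 0 -> 0 <= C -> forall eps, 0 < eps ->
  exists M, 0 < M /\ forall y, M < y -> C * Rpower y b / (- b) < eps.
Proof.
  intros Hb HC eps He.
  destruct (Rpower_smallinf b Hb (eps * (- b) / (C+1))) as [M [HM Hy]].
  { apply Rdiv_lt_0_compat; nra. }
  exists M; split; auto. intros y Hyd. specialize (Hy y Hyd).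
  pose proof (Rpower_pos y b).
  apply Rmult_lt_compat_r with (r := (C+1)) in Hy; [|lra].
  unfold Rdiv in Hy. rewrite Rmult_assoc, Rinv_l, Rmult_1_r in Hy by lra.
  apply Rmult_lt_reg_r with (- b). lra. unfold Rdiv. rewrite Rmult_assoc, Rinv_l, Rmult_1_r by lra.
  nra.
Qed.

Lemma nat_gt K : exists N, K < INR N.
Proof.
  destruct (archimed (Rabs K)) as [H1 H2].
  assert (0 < IZR (up (Rabs K))) by (pose proof (Rabs_pos K); lra).
  apply lt_0_IZR in H.
  exists (Z.to_nat (up (Rabs K))). rewrite INR_IZR_INZ, Z2Nat.id by lia.
  pose proof (Rle_abs K). lra.
Qed.

Lemma Chasles_R (f : R -> R) a b c : (forall t, 0 < t -> continuous f t) -> 0 < a -> a <= b -> b <= c ->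
  RInt f a c = RInt f a b + RInt f b c.
Proof.
  intros Hf Ha Hab Hbc. symmetry.
  apply (RInt_Chasles (V:=R_CompleteNormedModule)); apply cont_ex_RInt; auto; lra.
Qed.

Lemma decomp f C b x' x y y' : goodf f C b -> -1 < b < 0 -> 0 <= C -> 0 < x' -> x' <= x -> x <= y -> y <= y' ->
  Rabs (RInt f x' y' - RInt f x y) <= C * Rpower x (b+1) / (b+1) + C * Rpower y b / (- b).
Proof.
  intros G Hb HC H1 H2 H3 H4. pose proof G as [Hc _].
  rewrite (Chasles_R f x' x y') by (auto; lra).
  rewrite (Chasles_R f x y y') by (auto; lra).
  replace (RInt f x' x + (RInt f x y + RInt f y y') - RInt f x y) with (RInt f x' x + RInt f y y') by ring.
  eapply Rle_trans. apply Rabs_triang.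
  apply Rplus_le_compat. apply (tail0 f C b); auto. apply (tailinf f C b); auto; lra.
Qed.

Lemma exist_gen f C b : goodf f C b -> -1 < b < 0 -> 0 <= C ->
  exists I, is_RInt_gen f (at_right 0) (Rbar_locally p_infty) I /\
   forall x y, 0 < x -> x <= y -> Rabs (I - RInt f x y) <= C * Rpower x (b+1) / (b+1) + C * Rpower y b / (- b).
Proof.
  intros G Hb HC. pose proof G as [Hc _].
  set (v := fun n : nat => (RInt f (/ INR (S n)) (INR (S n)) : R)).
  assert (Hxn: forall n, 0 < / INR (S n) <= 1).
  { intros n. pose proof (lt_0_INR (S n) ltac:(lia)). split. apply Rinv_0_lt_compat; auto.
    rewrite <- Rinv_1. apply Rinv_le_contravar. lra. rewrite S_INR. pose proof (pos_INR n); lra. }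
  assert (Hyn: forall n, 1 <= INR (S n)).
  { intros n. rewrite S_INR. pose proof (pos_INR n); lra. }
  assert (Hmono: forall n m, (n <= m)%nat -> / INR (S m) <= / INR (S n) /\ INR (S n) <= INR (S m)).
  { intros n m Hnm. assert (INR (S n) <= INR (S m)) by (apply le_INR; lia).
    split; auto. apply Rinv_le_contravar; auto. apply lt_0_INR; lia. }
  assert (Hsmall: forall eps, 0 < eps -> exists N, forall n, (N <= n)%nat ->
     C * Rpower (/ INR (S n)) (b+1) / (b+1) + C * Rpower (INR (S n)) b / (- b) < eps).
  { intros eps He.
    destruct (T0_small C b ltac:(lra) HC (eps/2) ltac:(lra)) as [d [Hd Hd']].
    destruct (Ti_small C b ltac:(lra) HC (eps/2) ltac:(lra)) as [M [HM HM']].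
    destruct (nat_gt (Rmax (/ d) M)) as [N HN].
    exists N. intros n Hn. pose proof (Rmax_l (/d) M). pose proof (Rmax_r (/d) M).
    assert (INR N <= INR n) by (apply le_INR; auto).
    assert (HS: INR n < INR (S n)) by (rewrite S_INR; lra).
    assert (/ INR (S n) < d).
    { rewrite <- (Rinv_inv d). apply Rinv_lt_contravar. apply Rmult_lt_0_compat; auto.
      apply Rinv_0_lt_compat; auto. apply lt_0_INR; lia. lra. }
    specialize (Hd' (/ INR (S n)) (proj1 (Hxn n)) H2).
    specialize (HM' (INR (S n)) ltac:(lra)). lra. }
  assert (Hcauchy: Cauchy_crit v).
  { intros eps He. destruct (Hsmall eps He) as [N HN]. exists N.
    intros n m Hn Hm. unfold R_dist, v.
    destruct (Nat.le_ge_cases n m) as [Hnm|Hnm].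
    - destruct (Hmono n m Hnm). rewrite Rabs_minus_sym.
      eapply Rle_lt_trans. apply (decomp f C b (/ INR (S m)) (/ INR (S n)) (INR (S n)) (INR (S m)) G Hb HC (proj1 (Hxn m)) H ltac:(specialize (Hxn n); specialize (Hyn n); lra) H0). apply HN; auto.
    - destruct (Hmono m n Hnm).
      eapply Rle_lt_trans. apply (decomp f C b (/ INR (S n)) (/ INR (S m)) (INR (S m)) (INR (S n)) G Hb HC (proj1 (Hxn n)) H ltac:(specialize (Hxn m); specialize (Hyn m); lra) H0). apply HN; auto. }
  destruct (Stdlib.Reals.Rcomplete.R_complete v Hcauchy) as [l Hl].
  assert (Hbound: forall x y, 0 < x -> x <= y -> Rabs (l - RInt f x y) <= C * Rpower x (b+1) / (b+1) + C * Rpower y b / (- b)).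
  { intros x y Hx Hxy. apply Rle_plus_epsilon. intros eps He.
    destruct (Hl eps He) as [N1 HN1].
    destruct (nat_gt (Rmax (/ x) y)) as [N2 HN2].
    set (n := max N1 N2).
    pose proof (Rmax_l (/x) y). pose proof (Rmax_r (/x) y).
    assert (INR N2 <= INR n) by (apply le_INR; lia).
    assert (HS: INR n < INR (S n)) by (rewrite S_INR; lra).
    assert (/ INR (S n) <= x).
    { rewrite <- (Rinv_inv x). apply Rinv_le_contravar. apply Rinv_0_lt_compat; auto. lra. }
    specialize (HN1 n ltac:(lia)). unfold R_dist in HN1.
    pose proof (decomp f C b (/ INR (S n)) x y (INR (S n)) G Hb HC (proj1 (Hxn n)) H2 Hxy ltac:(lra)).
    fold (v n) in H3.
    replace (l - RInt f x y) with ((v n - RInt f x y) - (v n - l)) by ring.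
    eapply Rle_trans. apply Rabs_triang. rewrite Rabs_Ropp. lra. }
  exists l. split; auto.
  apply approx_gen; auto.
  intros eps He.
  destruct (T0_small C b ltac:(lra) HC (eps/2) ltac:(lra)) as [d [Hd Hd']].
  destruct (Ti_small C b ltac:(lra) HC (eps/2) ltac:(lra)) as [M [HM HM']].
  exists (Rmin d 1). split. apply Rmin_pos; lra. exists (Rmax M 1).
  intros x y Hx Hxd Hy. pose proof (Rmin_l d 1). pose proof (Rmin_r d 1).
  pose proof (Rmax_l M 1). pose proof (Rmax_r M 1).
  rewrite Rabs_minus_sym. eapply Rle_lt_trans. apply Hbound; auto; lra.
  specialize (Hd' x Hx ltac:(lra)). specialize (HM' y ltac:(lra)). lra.
Qed.

Fixpoint ps (a : nat -> R) (N : nat) : R :=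
  match N with O => 0 | S k => ps a k + a k end.

Lemma ps_S_sum_n a N : ps a (S N) = sum_n a N.
Proof.
  induction N. simpl. rewrite sum_O; ring.
  rewrite sum_Sn. change (ps a (S (S N))) with (ps a (S N) + a (S N)). rewrite IHN. reflexivity.
Qed.

Lemma is_series_ps a (l : R) : is_lim_seq (ps a) l -> is_series a l.
Proof.
  intros H. apply is_lim_seq_incr_1 in H.
  assert (is_lim_seq (sum_n a) l).
  { eapply is_lim_seq_ext; [|exact H]. intros n; simpl. apply ps_S_sum_n. }
  exact H0.
Qed.

Lemma ps_is_series a (l : R) : is_series a l -> is_lim_seq (ps a) l.
Proof.
  intros H. apply is_lim_seq_incr_1.
  eapply is_lim_seq_ext; [|exact H]. intros n; simpl. symmetry. apply ps_S_sum_n.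
Qed.

Lemma ps_abs a N : Rabs (ps a N) <= ps (fun n => Rabs (a n)) N.
Proof.
  induction N; simpl. rewrite Rabs_R0; lra.
  eapply Rle_trans. apply Rabs_triang. lra.
Qed.

Lemma ps_le a b N : (forall n, a n <= b n) -> ps a N <= ps b N.
Proof. intros H; induction N; simpl. lra. specialize (H N); lra. Qed.

Lemma ps_scal c a N : ps (fun n => c * a n) N = c * ps a N.
Proof. induction N; simpl. ring. rewrite IHN; ring. Qed.

Lemma lim_abs_le u (l : R) M : is_lim_seq u l -> (forall n, Rabs (u n) <= M) -> Rabs l <= M.
Proof.
  intros H HM. apply is_lim_seq_abs in H.
  pose proof (is_lim_seq_le _ _ _ _ HM H (is_lim_seq_const M)). simpl in H0. exact H0.
Qed.

Lemma ex_series_bounded (z : nat -> R) Z : (forall n, 0 <= z n) -> (forall N, ps z N <= Z) ->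
  exists l, is_series z l /\ l <= Z.
Proof.
  intros Hz HZ.
  destruct (growing_cv (ps z)) as [l Hl].
  - intros n. simpl. specialize (Hz n). lra.
  - exists Z. intros x [i Hi]. subst. apply HZ.
  - exists l. split. apply is_series_ps. apply is_lim_seq_Reals. auto.
    apply is_lim_seq_Reals in Hl.
    pose proof (is_lim_seq_le _ _ _ _ HZ Hl (is_lim_seq_const Z)). exact H.
Qed.

Lemma norm_R (x : R) : norm x = Rabs x.
Proof. reflexivity. Qed.

Lemma Rpower_1_base x : Rpower 1 x = 1.
Proof. unfold Rpower. rewrite ln_1, Rmult_0_r, exp_0. reflexivity. Qed.

Lemma zeta_step b u : b < 0 -> 1 <= u -> Rpower (u+1) (b-1) <= (Rpower u b - Rpower (u+1) b) / (- b).
Proof.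
  intros Hb Hu.
  destruct (MVT_gen (fun t => Rpower t b) u (u+1) (fun t => b * Rpower t (b-1))) as [c [Hc Heq]].
  - intros x Hx. rewrite Rmin_left, Rmax_right in Hx by lra. apply is_derive_Rpower; lra.
  - intros x Hx. rewrite Rmin_left, Rmax_right in Hx by lra. apply continuity_pt_filterlim. apply cont_Rpower; lra.
  - rewrite Rmin_left, Rmax_right in Hc by lra.
    replace (Rpower u b - Rpower (u+1) b) with (- (b * Rpower c (b-1) * (u + 1 - u))) by lra.
    replace (- (b * Rpower c (b - 1) * (u + 1 - u)) / - b) with (Rpower c (b-1)) by (field; lra).
    apply Rpower_le_base_neg; lra.
Qed.

Lemma zeta_ps b N : -1 < b < 0 -> ps (fun m => Rpower (INR (S m)) (b-1)) N <= 1 - / b.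
Proof.
  intros Hb.
  assert (H: forall N, ps (fun m => Rpower (INR (S m)) (b-1)) (S N) <= 1 + (1 - Rpower (INR (S N)) b) / (- b)).
  { induction N0.
    - simpl. rewrite !Rpower_1_base. replace ((1 - 1) / - b) with 0 by (field; lra). lra.
    - change (ps (fun m => Rpower (INR (S m)) (b - 1)) (S (S N0))) with
        (ps (fun m => Rpower (INR (S m)) (b - 1)) (S N0) + Rpower (INR (S (S N0))) (b - 1)).
      pose proof (zeta_step b (INR (S N0)) ltac:(lra) ltac:(rewrite S_INR; pose proof (pos_INR N0); lra)).
      rewrite <- S_INR in H.
      replace (1 + (1 - Rpower (INR (S (S N0))) b) / - b) with
        (1 + (1 - Rpower (INR (S N0)) b) / - b + (Rpower (INR (S N0)) b - Rpower (INR (S (S N0))) b) / - b)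
        by (field; lra).
      lra. }
  destruct N. simpl. assert (0 < / - b) by (apply Rinv_0_lt_compat; lra).
  replace (1 - / b) with (1 + / - b) by (field; lra). lra.
  eapply Rle_trans. apply H. pose proof (Rpower_pos (INR (S N)) b).
  replace (1 - / b) with (1 + 1 / - b) by (field; lra).
  unfold Rdiv. apply Rplus_le_compat_l. apply Rmult_le_compat_r. left; apply Rinv_0_lt_compat; lra. lra.
Qed.

Lemma Rpower_bp1 h b : 0 < h -> Rpower h (b+1) = h * h * Rpower h (b-1).
Proof.
  intros Hh. replace (b+1) with (1 + (1 + (b-1))) by ring. rewrite !Rpower_plus, Rpower_1 by auto. ring.
Qed.

Lemma Rpower_b h b : 0 < h -> Rpower h b = h * Rpower h (b-1).
Proof.
  intros Hh. replace b with (1 + (b-1)) at 1 by ring. rewrite !Rpower_plus, Rpower_1 by auto. ring.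
Qed.

Lemma step_err f df C b h u : goodf f C b -> -1 < b < 0 -> 0 <= C ->
  (forall t, 0 < t -> is_derive f t (df t)) -> (forall t, 0 < t -> Rabs (df t) <= C * Rpower t (b-1)) ->
  0 < h -> 1 <= u ->
  Rabs (h * f ((u+1)*h) - RInt f (u*h) ((u+1)*h)) <= C * Rpower h (b+1) * Rpower u (b-1).
Proof.
  intros G Hb HC Hd Hdb Hh Hu. pose proof G as [Hc _].
  set (x1 := u*h). set (x2 := (u+1)*h).
  assert (Hx1: 0 < x1) by (unfold x1; nra). assert (Hx12: x2 - x1 = h) by (unfold x1, x2; ring).
  assert (E: h * f x2 - RInt f x1 x2 = RInt (fun t => f x2 - f t) x1 x2).
  { symmetry. apply is_RInt_unique.
    pose proof (is_RInt_minus _ _ _ _ _ _ (is_RInt_const x1 x2 (f x2))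
                 (RInt_correct f x1 x2 (cont_ex_RInt f x1 x2 Hc Hx1 ltac:(lra)))) as HH.
    replace (h * f x2 - RInt f x1 x2) with (minus (scal (x2 - x1) (f x2)) (RInt f x1 x2)).
    exact HH. rewrite Hx12. reflexivity. }
  rewrite E.
  eapply Rle_trans. apply (abs_RInt_le_const _ x1 x2 (h * (C * Rpower x1 (b-1)))). lra.
  apply cont_ex_RInt; auto; try lra. intros t Ht. apply (continuous_minus (fun _ => f x2) f).
  apply continuous_const. apply Hc; lra.
  - intros t Ht. destruct (Req_dec t x2) as [Heq|Hne].
    + rewrite Heq. replace (f x2 - f x2) with 0 by ring. rewrite Rabs_R0.
      apply Rmult_le_pos; [lra| apply Rmult_le_pos; [lra| left; apply Rpower_pos]].
    + destruct (MVT_gen f t x2 df) as [c [Hc1 Hc2]].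
      * intros x Hx. rewrite Rmin_left, Rmax_right in Hx by lra. apply Hd; lra.
      * intros x Hx. rewrite Rmin_left, Rmax_right in Hx by lra. apply continuity_pt_filterlim, Hc; lra.
      * rewrite Rmin_left, Rmax_right in Hc1 by lra. rewrite Hc2, Rabs_mult.
        assert (Rabs (df c) <= C * Rpower x1 (b-1)).
        { eapply Rle_trans. apply Hdb; lra. apply Rmult_le_compat_l; auto. apply Rpower_le_base_neg; lra. }
        rewrite (Rabs_right (x2 - t)) by lra.
        pose proof (Rabs_pos (df c)). nra.
  - rewrite Hx12. unfold x1. rewrite <- Rpower_mult_distr by lra. rewrite Rpower_bp1 by auto. nra.
Qed.

Lemma riemann f df C b I h : goodf f C b -> -1 < b < 0 -> 0 <= C ->
  (forall t, 0 < t -> is_derive f t (df t)) -> (forall t, 0 < t -> Rabs (df t) <= C * Rpower t (b-1)) ->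
  (forall x y, 0 < x -> x <= y -> Rabs (I - RInt f x y) <= C * Rpower x (b+1) / (b+1) + C * Rpower y b / (- b)) ->
  0 < h ->
  exists Sv Ev, is_series (fun n => h * f (INR (S n) * h)) Sv /\
    is_series (fun n => h * f (INR (S n) * h) / INR (S n)) Ev /\
    Rabs (Sv - I) <= C * (2 - / b + / (b+1)) * Rpower h (b+1) /\
    Rabs Ev <= C * (1 - / b) * Rpower h (b+1).
Proof.
  intros G Hb HC Hd Hdb HI Hh. pose proof G as [Hc [H1 H2]].
  set (z := fun m => Rpower (INR (S m)) (b-1)).
  assert (Hz: forall N, ps z N <= 1 - / b) by (intros; apply zeta_ps; auto).
  assert (Hzpos: forall n, 0 <= z n) by (intros; left; apply Rpower_pos).
  destruct (ex_series_bounded z (1 - / b) Hzpos Hz) as [Zl [HZl HZle]].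
  assert (HSn: forall n, 0 < INR (S n)) by (intros; apply lt_0_INR; lia).
  set (a := fun n => h * f (INR (S n) * h)).
  assert (Ha: forall n, Rabs (a n) <= C * Rpower h b * z n).
  { intros n. unfold a, z. rewrite Rabs_mult, Rabs_right by lra.
    specialize (H2 (INR (S n) * h) ltac:(specialize (HSn n); nra)).
    rewrite <- Rpower_mult_distr in H2 by auto. rewrite (Rpower_b h b) by auto.
    pose proof (Rpower_pos (INR (S n)) (b-1)). pose proof (Rpower_pos h (b-1)). nra. }
  set (e := fun n => h * f (INR (S n) * h) / INR (S n)).
  assert (He: forall n, Rabs (e n) <= C * Rpower h (b+1) * z n).
  { intros n. unfold e, z. specialize (HSn n).
    replace (h * f (INR (S n) * h) / INR (S n)) with ((h / INR (S n)) * f (INR (S n) * h)) by (field; lra).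
    rewrite Rabs_mult, (Rabs_right (h / INR (S n))) by (left; apply Rdiv_lt_0_compat; lra).
    specialize (H1 (INR (S n) * h) ltac:(nra)).
    rewrite <- Rpower_mult_distr in H1 by auto. rewrite (Rpower_b (INR (S n)) b) in H1 by auto.
    apply Rle_trans with ((h / INR (S n)) * (C * (INR (S n) * Rpower (INR (S n)) (b - 1) * Rpower h b))).
    apply Rmult_le_compat_l; auto. left; apply Rdiv_lt_0_compat; lra.
    right. rewrite (Rpower_bp1 h b), (Rpower_b h b) by auto. field. lra. }
  assert (Hexa: ex_series a).
  { apply (ex_series_le a (fun n => C * Rpower h b * z n)). intros n; rewrite norm_R; apply Ha.
    apply (ex_series_scal_l (C * Rpower h b) z). exists Zl; auto. }
  assert (Hexe: ex_series e).
  { apply (ex_series_le e (fun n => C * Rpower h (b+1) * z n)). intros n; rewrite norm_R; apply He.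
    apply (ex_series_scal_l (C * Rpower h (b+1)) z). exists Zl; auto. }
  destruct Hexa as [Sv HS]. destruct Hexe as [Ev HE].
  exists Sv, Ev. split; [exact HS|]. split; [exact HE|].
  split.
  2:{ apply (lim_abs_le (ps e)). apply ps_is_series; auto.
      intros N. eapply Rle_trans. apply ps_abs.
      eapply Rle_trans. apply (ps_le _ (fun n => C * Rpower h (b+1) * z n)). apply He.
      rewrite ps_scal. pose proof (Rpower_pos h (b+1)).
      replace (C * (1 - / b) * Rpower h (b+1)) with (C * Rpower h (b+1) * (1 - / b)) by ring.
      apply Rmult_le_compat_l. apply Rmult_le_pos; lra. apply Hz. }
  assert (Claim: forall N, Rabs (ps a (S N) - h * f h - RInt f h (INR (S N) * h)) <= C * Rpower h (b+1) * ps z N).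
  { induction N.
    - simpl. unfold a. simpl. repeat rewrite Rmult_1_l. rewrite RInt_point. change (@zero R_CompleteNormedModule) with 0.
      replace (0 + h * f h - h * f h - 0) with 0 by ring. rewrite Rabs_R0. lra.
    - change (ps a (S (S N))) with (ps a (S N) + a (S N)).
      change (ps z (S N)) with (ps z N + z N).
      assert (HN1: 1 <= INR (S N)) by (rewrite S_INR; pose proof (pos_INR N); lra).
      assert (HA: h <= INR (S N) * h) by nra.
      assert (HB: INR (S N) * h <= INR (S (S N)) * h) by (rewrite (S_INR (S N)); nra).
      rewrite (Chasles_R f h (INR (S N) * h) (INR (S (S N)) * h)) by (auto; lra).
      pose proof (step_err f df C b h (INR (S N)) G Hb HC Hd Hdb Hh ltac:(rewrite S_INR; pose proof (pos_INR N); lra)).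
      rewrite <- S_INR in H. unfold a at 2. unfold z at 2.
      replace (ps a (S N) + h * f (INR (S (S N)) * h) - h * f h - (RInt f h (INR (S N) * h) + RInt f (INR (S N) * h) (INR (S (S N)) * h)))
        with ((ps a (S N) - h * f h - RInt f h (INR (S N) * h)) + (h * f (INR (S (S N)) * h) - RInt f (INR (S N) * h) (INR (S (S N)) * h))) by ring.
      eapply Rle_trans. apply Rabs_triang. lra. }
  apply Rle_plus_epsilon. intros eps Heps.
  apply ps_is_series in HS. apply is_lim_seq_spec in HS.
  destruct (HS (mkposreal (eps/2) ltac:(lra))) as [N1 HN1].
  destruct (Ti_small C b ltac:(lra) HC (eps/2) ltac:(lra)) as [M [HM HM']].
  destruct (nat_gt (M / h)) as [N2 HN2].
  set (N := max N1 N2).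
  specialize (HN1 (S N) ltac:(lia)). simpl in HN1.
  assert (HNh: M < INR (S N) * h).
  { assert (INR N2 <= INR (S N)) by (apply le_INR; lia).
    apply Rmult_lt_reg_r with (/ h). apply Rinv_0_lt_compat; auto.
    rewrite Rmult_assoc, Rinv_r, Rmult_1_r by lra. unfold Rdiv in HN2. lra. }
  specialize (HM' _ HNh).
  specialize (Claim N).
  pose proof (zeta_ps b N Hb).
  assert (Hx: 1 * h <= INR (S N) * h) by (apply Rmult_le_compat_r; [lra| rewrite S_INR; pose proof (pos_INR N); lra]).
  rewrite Rmult_1_l in Hx.
  specialize (HI h (INR (S N) * h) Hh Hx).
  assert (Hfh: Rabs (h * f h) <= C * Rpower h (b+1)).
  { rewrite Rabs_mult, Rabs_right by lra. specialize (H1 h Hh).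
    rewrite (Rpower_bp1 h b) by auto. rewrite (Rpower_b h b) in H1 by auto. nra. }
  assert (Hzz: C * Rpower h (b+1) * ps z N <= C * Rpower h (b+1) * (1 - / b)).
  { apply Rmult_le_compat_l; auto. pose proof (Rpower_pos h (b+1)). nra. }
  replace (Sv - I) with ((ps a (S N) - h * f h - RInt f h (INR (S N) * h)) + h * f h - (I - RInt f h (INR (S N) * h)) - (ps a (S N) - Sv)) by ring.
  eapply Rle_trans. apply Rabs_triang. eapply Rle_trans. apply Rplus_le_compat_l. rewrite Rabs_Ropp. left; exact HN1.
  eapply Rle_trans. apply Rplus_le_compat_r. apply Rabs_triang.
  eapply Rle_trans. apply Rplus_le_compat_r. apply Rplus_le_compat_l. rewrite Rabs_Ropp. apply HI.
  eapply Rle_trans. apply Rplus_le_compat_r. apply Rplus_le_compat_r. apply Rabs_triang.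
  replace (C * (2 - / b + / (b + 1)) * Rpower h (b + 1)) with
    (C * Rpower h (b+1) * (1 - / b) + C * Rpower h (b+1) + C * Rpower h (b + 1) / (b + 1)) by (field; lra).
  lra.
Qed.

Definition phi (a : R) (s : nat) (t : R) : R := Rpower t a * exp (- 2 * t ^ 2) * (ln t) ^ s.
Definition dphi (a : R) (s : nat) (t : R) : R :=
  Rpower t (a - 1) * exp (- 2 * t ^ 2) * ((a - 4 * t ^ 2) * ln t ^ s + INR s * ln t ^ (pred s)).

Lemma is_derive_phi a s t : 0 < t -> is_derive (phi a s) t (dphi a s t).
Proof.
  intros Ht. unfold phi, dphi, Rpower. auto_derive. lra.
  replace ((a - 1) * ln t) with (a * ln t + - ln t) by ring.
  rewrite exp_plus, exp_Ropp, exp_ln by auto. replace (t * (t * 1)) with (t ^ 2) by ring. match goal with |- ?x = ?y => change (x = y :> R) end. field. lra.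
Qed.

Lemma phi_cont a s t : 0 < t -> continuous (phi a s) t.
Proof. intros Ht. apply (ex_derive_continuous (phi a s)). eexists. apply is_derive_phi; auto. Qed.

Lemma phi_bounds a s : -1 < a -> exists C b, -1 < b < 0 /\ 0 <= C /\ goodf (phi a s) C b /\
  (forall t, 0 < t -> Rabs (dphi a s t) <= C * Rpower t (b-1)).
Proof.
  intros Ha.
  set (b := Rmin ((a-1)/2) (-1/2)).
  assert (Hb: -1 < b < 0).
  { unfold b. pose proof (Rmin_r ((a-1)/2) (-1/2)). unfold Rmin. destruct (Rle_dec ((a-1)/2) (-1/2)); lra. }
  set (c := a - b).
  assert (Hc: 0 < c).
  { unfold c, b. unfold Rmin. destruct (Rle_dec ((a-1)/2) (-1/2)); lra. }
  destruct (keybound c s 0 Hc) as [M0 HM0].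
  destruct (keybound c s 1 Hc) as [M1 HM1].
  destruct (keybound c s 2 Hc) as [M2 HM2].
  destruct (keybound c (pred s) 0 Hc) as [M3 HM3].
  set (C := Rabs M0 + Rabs M1 + (Rabs a * Rabs M0 + 4 * Rabs M2 + INR s * Rabs M3)).
  assert (HC0: 0 <= C).
  { unfold C. pose proof (Rabs_pos M0). pose proof (Rabs_pos M1). pose proof (Rabs_pos M2).
    pose proof (Rabs_pos M3). pose proof (Rabs_pos a). pose proof (pos_INR s). nra. }
  exists C, b. split; auto. split; auto.
  assert (Hgen: forall t, 0 < t -> forall e, Rpower t (e + c) = Rpower t e * Rpower t c).
  { intros t Ht e. apply Rpower_plus. }
  split; [split; [|split]|].
  - intros t Ht. apply phi_cont; auto.
  - intros t Ht. specialize (HM0 t Ht). rewrite pow_O, Rmult_1_r in HM0.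
    unfold phi. rewrite !Rabs_mult, <- RPow_abs, (Rabs_right (Rpower t a)), (Rabs_right (exp _))
      by (left; first [apply Rpower_pos | apply exp_pos]).
    replace a with (b + c) at 1 by (unfold c; ring). rewrite Rpower_plus.
    pose proof (Rpower_pos t b). pose proof (Rle_abs M0).
    assert (C1: Rabs M0 <= C).
    { unfold C. pose proof (Rabs_pos M1). pose proof (Rabs_pos M2).
      pose proof (Rabs_pos M3). pose proof (Rabs_pos a). pose proof (Rabs_pos M0). pose proof (pos_INR s). nra. }
    replace (Rpower t b * Rpower t c * exp (- 2 * t ^ 2) * Rabs (ln t) ^ s) with
      (Rpower t b * (Rpower t c * Rabs (ln t) ^ s * exp (- 2 * t ^ 2))) by ring.
    rewrite (Rmult_comm C). apply Rmult_le_compat_l. lra. lra.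
  - intros t Ht. specialize (HM1 t Ht). rewrite pow_1 in HM1.
    unfold phi. rewrite !Rabs_mult, <- RPow_abs, (Rabs_right (Rpower t a)), (Rabs_right (exp _))
      by (left; first [apply Rpower_pos | apply exp_pos]).
    replace a with ((b - 1) + c + 1) at 1 by (unfold c; ring). rewrite !Rpower_plus, Rpower_1 by auto.
    pose proof (Rpower_pos t (b-1)). pose proof (Rle_abs M1).
    assert (C1: Rabs M1 <= C).
    { unfold C. pose proof (Rabs_pos M0). pose proof (Rabs_pos M2).
      pose proof (Rabs_pos M3). pose proof (Rabs_pos a). pose proof (Rabs_pos M0). pose proof (pos_INR s). nra. }
    replace (Rpower t (b - 1) * Rpower t c * t * exp (- 2 * t ^ 2) * Rabs (ln t) ^ s) with
      (Rpower t (b-1) * (Rpower t c * Rabs (ln t) ^ s * t * exp (- 2 * t ^ 2))) by ring.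
    rewrite (Rmult_comm C). apply Rmult_le_compat_l. lra. lra.
  - intros t Ht. specialize (HM0 t Ht). rewrite pow_O, Rmult_1_r in HM0.
    specialize (HM2 t Ht). specialize (HM3 t Ht). rewrite pow_O, Rmult_1_r in HM3.
    unfold dphi. rewrite !Rabs_mult, (Rabs_right (Rpower t (a-1))), (Rabs_right (exp _))
      by (left; first [apply Rpower_pos | apply exp_pos]).
    replace (a - 1) with ((b - 1) + c) at 1 by (unfold c; ring). rewrite !Rpower_plus.
    set (L := ln t) in *. set (P := Rpower t c) in *. set (E := exp (- 2 * t ^ 2)) in *.
    assert (HP: 0 < P) by apply Rpower_pos. assert (HE: 0 < E) by apply exp_pos.
    assert (Htri: Rabs ((a - 4 * t ^ 2) * L ^ s + INR s * L ^ pred s) <=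
       Rabs a * Rabs L ^ s + 4 * t ^ 2 * Rabs L ^ s + INR s * Rabs L ^ pred s).
    { eapply Rle_trans. apply Rabs_triang. rewrite !Rabs_mult, <- !RPow_abs, (Rabs_right (INR s)) by (apply Rle_ge, pos_INR).
      apply Rplus_le_compat_r. 
      assert (Rabs (a - 4 * t^2) <= Rabs a + 4 * t^2).
      { eapply Rle_trans. apply Rabs_triang. rewrite Rabs_Ropp. rewrite (Rabs_right (4 * t^2)) by nra. lra. }
      pose proof (pow_le (Rabs L) s (Rabs_pos L)). nra. }
    assert (Hsum: P * E * (Rabs a * Rabs L ^ s + 4 * t ^ 2 * Rabs L ^ s + INR s * Rabs L ^ pred s) <= C).
    { replace (P * E * (Rabs a * Rabs L ^ s + 4 * t ^ 2 * Rabs L ^ s + INR s * Rabs L ^ pred s))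
        with (Rabs a * (P * Rabs L ^ s * E) + 4 * (P * Rabs L ^ s * t^2 * E) + INR s * (P * Rabs L ^ pred s * E)) by ring.
      unfold C. pose proof (Rle_abs M0). pose proof (Rle_abs M2). pose proof (Rle_abs M3).
      pose proof (Rabs_pos a). pose proof (pos_INR s). pose proof (Rabs_pos M1). pose proof (Rabs_pos M0).
      assert (Rabs a * (P * Rabs L ^ s * E) <= Rabs a * Rabs M0) by (apply Rmult_le_compat_l; lra).
      assert (INR s * (P * Rabs L ^ pred s * E) <= INR s * Rabs M3) by (apply Rmult_le_compat_l; lra).
      lra. }
    pose proof (Rpower_pos t (b-1)).
    apply Rle_trans with (Rpower t (b - 1) * (P * E * (Rabs a * Rabs L ^ s + 4 * t ^ 2 * Rabs L ^ s + INR s * Rabs L ^ pred s))).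
    + replace (Rpower t (b - 1) * P * E * Rabs ((a - 4 * t ^ 2) * L ^ s + INR s * L ^ pred s)) with
        (Rpower t (b - 1) * (P * E) * Rabs ((a - 4 * t ^ 2) * L ^ s + INR s * L ^ pred s)) by ring.
      replace (Rpower t (b - 1) * (P * E * (Rabs a * Rabs L ^ s + 4 * t ^ 2 * Rabs L ^ s + INR s * Rabs L ^ pred s)))
        with (Rpower t (b - 1) * (P * E) * (Rabs a * Rabs L ^ s + 4 * t ^ 2 * Rabs L ^ s + INR s * Rabs L ^ pred s)) by ring.
      apply Rmult_le_compat_l; [apply Rmult_le_pos; nra | exact Htri].
    + rewrite (Rmult_comm C). apply Rmult_le_compat_l; lra.
Qed.

Definition gam (x : R) (t : R) : R := Rpower t (x - 1) * exp (- t).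

Lemma gam_cont x t : 0 < t -> continuous (gam x) t.
Proof. intros Ht. contR. unfold gam, Rpower. auto_derive. lra. Qed.

Lemma subst_gam x a1 b1 : 0 < a1 -> 0 < b1 ->
  RInt (gam x) (2 * a1 ^ 2) (2 * b1 ^ 2) = Rpower 2 (x + 1) * RInt (phi (2 * x - 1) 0) a1 b1.
Proof.
  intros Ha Hb.
  assert (Hm: 0 < Rmin a1 b1) by (apply Rmin_pos; auto).
  pose proof (is_RInt_comp (V:=R_CompleteNormedModule) (gam x) (fun t => 2 * t ^ 2) (fun t => 4 * t) a1 b1) as HH.
  assert (HH2: is_RInt (fun y => Rpower 2 (x+1) * phi (2 * x - 1) 0 y) a1 b1 (RInt (gam x) (2 * a1 ^ 2) (2 * b1 ^ 2))).
  { eapply is_RInt_ext; [|apply HH].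
    - intros y Hy. assert (Hy0: 0 < y) by lra.
      unfold scal; simpl; unfold mult; simpl. unfold gam, phi, Rpower. simpl.
      rewrite ln_mult by nra. replace (y * (y * 1)) with (y ^ 2) by ring.
      rewrite ln_pow by auto.
      replace (4 * y) with (exp (ln 2 + ln 2 + ln y)).
      rewrite <- !exp_plus. rewrite Rmult_1_r, <- exp_plus. f_equal. simpl. ring.
      rewrite !exp_plus, !exp_ln by lra. ring.
    - intros z Hz. apply gam_cont. assert (0 < z) by lra. nra.
    - intros z Hz. split. auto_derive. auto. ring.
      contR. auto_derive. auto. }
  assert (HH3: is_RInt (fun y => Rpower 2 (x+1) * phi (2 * x - 1) 0 y) a1 b1 (Rpower 2 (x+1) * RInt (phi (2 * x - 1) 0) a1 b1)).
  { apply (is_RInt_scal (V:=R_NormedModule)). apply (RInt_correct (V:=R_CompleteNormedModule)).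
    apply (ex_RInt_continuous (V:=R_CompleteNormedModule)). intros z Hz. apply phi_cont. lra. }
  rewrite <- (is_RInt_unique _ _ _ _ HH2). apply is_RInt_unique. exact HH3.
Qed.

Lemma gamma_gen x I0 : is_RInt_gen (phi (2*x-1) 0) (at_right 0) (Rbar_locally p_infty) I0 ->
  is_RInt_gen (gam x) (at_right 0) (Rbar_locally p_infty) (Rpower 2 (x+1) * I0).
Proof.
  intros H. apply approx_gen. intros; apply gam_cont; auto.
  intros eps He. set (c := Rpower 2 (x+1)). assert (Hc: 0 < c) by apply Rpower_pos.
  destruct (gen_approx _ _ H (eps / c) ltac:(apply Rdiv_lt_0_compat; auto)) as [d [Hd [M HM]]].
  exists (2 * d ^ 2). split. nra. exists (2 * (Rabs M) ^ 2).
  intros u v Hu Hud Hv.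
  assert (Hv0: 0 < v) by (pose proof (pow2_ge_0 (Rabs M)); nra).
  set (a1 := sqrt (u / 2)). set (b1 := sqrt (v / 2)).
  assert (Ha1: 0 < a1) by (apply sqrt_lt_R0; lra).
  assert (Hb1: 0 < b1) by (apply sqrt_lt_R0; lra).
  assert (Eu: 2 * a1 ^ 2 = u) by (unfold a1; rewrite <- Rsqr_pow2, Rsqr_sqrt; lra).
  assert (Ev: 2 * b1 ^ 2 = v) by (unfold b1; rewrite <- Rsqr_pow2, Rsqr_sqrt; lra).
  assert (Had: a1 < d).
  { unfold a1. rewrite <- (sqrt_pow2 d) by lra. apply sqrt_lt_1; first [lra | apply pow2_ge_0]. }
  assert (Hbm: M < b1).
  { apply Rle_lt_trans with (Rabs M). apply Rle_abs.
    unfold b1. rewrite <- (sqrt_pow2 (Rabs M)) by apply Rabs_pos. apply sqrt_lt_1; first [lra | apply pow2_ge_0]. }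
  rewrite <- Eu, <- Ev, subst_gam by auto.
  specialize (HM a1 b1 Ha1 Had Hbm).
  fold c. replace (c * RInt (phi (2 * x - 1) 0) a1 b1 - c * I0) with (c * (RInt (phi (2 * x - 1) 0) a1 b1 - I0)) by ring. rewrite Rabs_mult, (Rabs_right c) by lra.
  apply Rmult_lt_compat_l with (r := c) in HM; auto.
  replace (c * (eps / c)) with eps in HM by (field; lra). exact HM.
Qed.

Lemma I0_pos a I0 : is_RInt_gen (phi a 0) (at_right 0) (Rbar_locally p_infty) I0 -> 0 < I0.
Proof.
  intros H.
  set (m := exp (- Rabs a * ln 2) * exp (- 8)).
  assert (Hm: 0 < m) by (unfold m; apply Rmult_lt_0_compat; apply exp_pos).
  assert (Hc: forall t, 0 < t -> continuous (phi a 0) t) by (intros; apply phi_cont; auto).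
  assert (H12: m <= RInt (phi a 0) 1 2).
  { apply Rle_trans with (RInt (fun _ => m) 1 2).
    rewrite RInt_const. unfold scal; simpl; unfold mult; simpl. lra.
    apply RInt_le. lra. apply ex_RInt_const. apply cont_ex_RInt; auto; lra.
    intros t Ht. unfold phi, m, Rpower. simpl. rewrite Rmult_1_r.
    assert (0 <= ln t) by (rewrite <- ln_1; apply ln_le; lra).
    assert (ln t <= ln 2) by (apply ln_le; lra).
    apply Rmult_le_compat; try (left; apply exp_pos).
    apply exp_le_mono. destruct (Rle_or_lt 0 a).
    rewrite Rabs_right by lra. nra. rewrite Rabs_left by lra. nra.
    apply exp_le_mono. nra. }
  destruct (gen_approx _ _ H (m/2) ltac:(lra)) as [d [Hd [M HM]]].
  set (x := Rmin (d/2) 1). set (y := Rmax (M + 1) 2).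
  assert (Hx: 0 < x) by (apply Rmin_pos; lra).
  assert (Hxd: x < d) by (unfold x; pose proof (Rmin_l (d/2) 1); lra).
  assert (Hx1: x <= 1) by (unfold x; apply Rmin_r).
  assert (Hy: M < y) by (unfold y; pose proof (Rmax_l (M+1) 2); lra).
  assert (Hy2: 2 <= y) by (unfold y; apply Rmax_r).
  specialize (HM x y Hx Hxd Hy).
  rewrite (Chasles_R _ x 1 y) in HM by (auto; lra).
  rewrite (Chasles_R _ 1 2 y) in HM by (auto; lra).
  assert (0 <= RInt (phi a 0) x 1).
  { apply RInt_ge_0; auto. apply cont_ex_RInt; auto. intros t Ht. unfold phi. simpl.
    rewrite Rmult_1_r. left; apply Rmult_lt_0_compat; [apply Rpower_pos|apply exp_pos]. }
  assert (0 <= RInt (phi a 0) 2 y).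
  { apply RInt_ge_0; auto. apply cont_ex_RInt; auto; lra. intros t Ht. unfold phi. simpl.
    rewrite Rmult_1_r. left; apply Rmult_lt_0_compat; [apply Rpower_pos|apply exp_pos]. }
  unfold Rabs in HM. destruct (Rcase_abs _) in HM; lra.
Qed.

Definition Tk (A : nat -> R) (k : nat) (al : R) : R :=
  Series (fun n => A n * ln (INR (S n)) ^ k * Rpower (INR (S n)) (- al)).

Lemma term_bound (A : nat -> R) n k y r : 0 <= A n -> Rabs y <= r ->
  Rabs (A n * ln (INR (S n)) ^ k * Rpower (INR (S n)) (- y)) <= A n * Rpower (INR (S n)) (INR k + r).
Proof.
  intros HA Hy. set (l := INR (S n)).
  assert (Hl: 1 <= l) by (unfold l; rewrite S_INR; pose proof (pos_INR n); lra).
  assert (H0: 0 <= ln l) by (rewrite <- ln_1; apply ln_le; lra).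
  assert (H1: ln l <= l) by (pose proof (ln_le_sub1 l ltac:(lra)); lra).
  rewrite !Rabs_mult, (Rabs_right (A n)), (Rabs_right (Rpower _ _)), <- RPow_abs, (Rabs_right (ln l)) by (first [lra | left; apply Rpower_pos]).
  rewrite Rpower_plus, Rpower_pow by lra.
  rewrite Rmult_assoc. apply Rmult_le_compat_l; auto.
  apply Rmult_le_compat. apply pow_le; auto. left; apply Rpower_pos.
  apply pow_incr; auto. apply Rle_Rpower; auto. pose proof (Rle_abs (- y)). rewrite Rabs_Ropp in H. lra.
Qed.

Lemma term_ex (A : nat -> R) k y : (forall n, 0 <= A n) ->
  (forall r, 0 <= r -> ex_series (fun n => A n * Rpower (INR (S n)) r)) ->
  ex_series (fun n => A n * ln (INR (S n)) ^ k * Rpower (INR (S n)) (- y)).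
Proof.
  intros HA Hs.
  apply (ex_series_le (K:=R_AbsRing) (V:=R_CompleteNormedModule) _ (fun n => A n * Rpower (INR (S n)) (INR k + Rabs y))).
  intros n. rewrite norm_R. apply term_bound; auto. lra.
  apply Hs. pose proof (pos_INR k); pose proof (Rabs_pos y); lra.
Qed.

Lemma SP_derive (u du : nat -> R -> R) x : (forall n, derivable_pt_lim (u n) x (du n x)) ->
  forall N, derivable_pt_lim (SP u N) x (SP du N x).
Proof.
  intros H N. induction N.
  - unfold SP. simpl. apply H.
  - unfold SP in *. simpl. apply (derivable_pt_lim_plus (fun y => sum_f_R0 (fun k => u k y) N) (u (S N))); auto.
Qed.

Lemma Tk_derive (A : nat -> R) k al : (forall n, 0 <= A n) ->
  (forall r, 0 <= r -> ex_series (fun n => A n * Rpower (INR (S n)) r)) ->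
  is_derive (Tk A k) al (- Tk A (S k) al).
Proof.
  intros HA Hs.
  set (u := fun n y => A n * ln (INR (S n)) ^ k * Rpower (INR (S n)) (- y)).
  set (du := fun n y => - (A n * ln (INR (S n)) ^ (S k) * Rpower (INR (S n)) (- y))).
  assert (Hr: 0 < Rabs al + 1) by (pose proof (Rabs_pos al); lra).
  set (r := mkposreal _ Hr).
  set (An := fun n => A n * Rpower (INR (S n)) (INR (S k) + (Rabs al + 1))).
  assert (HAn: ex_series An) by (apply Hs; pose proof (pos_INR (S k)); pose proof (Rabs_pos al); lra).
  assert (cvn: CVN_r du r).
  { exists An. exists (Series An). split.
    - apply is_lim_seq_Reals. 
      assert (is_series (fun k => Rabs (An k)) (Series An)).
      { eapply is_series_ext; [|apply Series_correct; exact HAn].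
        intros n. unfold An. symmetry. apply Rabs_right. apply Rle_ge, Rmult_le_pos; auto. left; apply Rpower_pos. }
      eapply is_lim_seq_ext; [|exact H]. intros n. rewrite sum_n_Reals. reflexivity.
    - intros n y Hy. unfold du, An. rewrite Rabs_Ropp. apply term_bound; auto.
      unfold Boule in Hy. simpl in Hy. rewrite Rminus_0_r in Hy. lra. }
  destruct (CVN_CVU_r du r cvn al ltac:(simpl; lra)) as [e He].
  assert (HD: derivable_pt_lim (fun y => Series (fun n => u n y)) al (Series (fun n => du n al))).
  { apply (CVU_derivable (fun n => SP u n) (fun n => SP du n) (fun y => Series (fun n => u n y))
             (fun y => Series (fun n => du n y)) al e He).
    - intros x Hx. apply is_lim_seq_Reals.
      pose proof (Series_correct _ (term_ex A k x HA Hs)) as HS.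
      eapply is_lim_seq_ext; [|exact HS]. intros n. rewrite sum_n_Reals. reflexivity.
    - intros n x Hx. apply SP_derive. intros m. apply is_derive_Reals.
      unfold u, du, Rpower. auto_derive. auto.
      simpl. ring.
    - unfold Boule. rewrite Rminus_diag, Rabs_R0. apply cond_pos. }
  apply is_derive_Reals.
  unfold Tk. replace (- Series (fun n => A n * ln (INR (S n)) ^ S k * Rpower (INR (S n)) (- al)))
    with (Series (fun n => du n al)). exact HD.
  unfold du. rewrite Series_opp. reflexivity.
Qed.

Lemma squeeze0 (x y : nat -> R) : (forall n, Rabs (x n) <= y n) -> is_lim_seq y 0 -> is_lim_seq x 0.
Proof.
  intros H Hy. apply (is_lim_seq_le_le (fun n => - y n) x y).
  intros n. specialize (H n). split. pose proof (Rle_abs (- x n)). rewrite Rabs_Ropp in H0. lra.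
  pose proof (Rle_abs (x n)). lra.
  apply is_lim_seq_opp in Hy. simpl in Hy. replace (-0) with 0 in Hy by ring. exact Hy. exact Hy.
Qed.

Lemma binom_low d n : 0 <= d -> 1 + INR n * d + INR n * (INR n - 1) / 2 * d ^ 2 <= (1 + d) ^ n.
Proof.
  intros Hd. induction n.
  - simpl. lra.
  - rewrite S_INR. simpl. pose proof (pos_INR n).
    assert (0 <= INR n * d ^ 2 * d) by (apply Rmult_le_pos; [nra|lra]).
    assert (0 <= INR n * (INR n - 1) / 2 * d ^ 2 * d \/ (INR n = 0)).
    { destruct n. right; reflexivity. left. rewrite S_INR. pose proof (pos_INR n).
      apply Rmult_le_pos; [|lra]. apply Rmult_le_pos; [|nra]. nra. }
    destruct H1.
    + nra.
    + rewrite H1. rewrite H1 in IHn. nra.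
Qed.

Lemma jqj q : 0 < q < 1 -> is_lim_seq (fun j => INR j * q ^ j) 0.
Proof.
  intros Hq. set (d := / q - 1).
  assert (Hd: 0 < d).
  { unfold d. assert (1 < / q). { rewrite <- Rinv_1. apply Rinv_lt_contravar; lra. } lra. }
  assert (Hqd: q = / (1 + d)) by (unfold d; field; lra).
  apply is_lim_seq_spec. intros eps.
  destruct (nat_gt (4 / (eps * d ^ 2) + 2)) as [N HN].
  exists N. intros n Hn.
  assert (HnN: INR N <= INR n) by (apply le_INR; lia).
  assert (Hpos: 0 < 4 / (eps * d ^ 2)).
  { apply Rdiv_lt_0_compat. lra. apply Rmult_lt_0_compat. apply cond_pos. nra. }
  assert (Hn2: 2 < INR n) by lra.
  pose proof (binom_low d n ltac:(lra)).
  assert (Hb: INR n ^ 2 * d ^ 2 / 4 <= (1 + d) ^ n).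
  { eapply Rle_trans; [|exact H]. assert (0 <= d^2) by nra. nra. }
  rewrite Rminus_0_r, Rabs_right.
  2:{ apply Rle_ge, Rmult_le_pos. apply pos_INR. apply pow_le; lra. }
  rewrite Hqd, pow_inv.
  assert (HP: 0 < INR n ^ 2 * d ^ 2 / 4) by (unfold Rdiv; apply Rmult_lt_0_compat; [apply Rmult_lt_0_compat; apply pow_lt; lra | lra]).
  apply Rle_lt_trans with (INR n * / (INR n ^ 2 * d ^ 2 / 4)).
  apply Rmult_le_compat_l. apply pos_INR. apply Rinv_le_contravar; auto.
  replace (INR n * / (INR n ^ 2 * d ^ 2 / 4)) with (4 / (INR n * d ^ 2)) by (field; split; lra).
  assert (HH: 4 / (eps * d^2) < INR n) by lra.
  assert (Hd2: 0 < d^2) by nra. pose proof (cond_pos eps).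
  apply Rmult_lt_reg_r with (INR n * d ^ 2). nra.
  unfold Rdiv. rewrite Rmult_assoc, Rinv_l, Rmult_1_r by nra.
  apply Rmult_lt_compat_r with (r := eps * d^2) in HH; [|nra].
  unfold Rdiv in HH. rewrite Rmult_assoc, Rinv_l, Rmult_1_r in HH by nra. nra.
Qed.

Lemma pow_exp_bound m e u : 0 <= m -> 0 < e -> 0 < u -> Rpower u m <= Rpower ((m+1)/e) m * exp (e * u).
Proof.
  intros Hm He Hu. unfold Rpower. rewrite <- exp_plus. apply exp_le_mono.
  assert (Hm1: 0 < (m+1)/e) by (apply Rdiv_lt_0_compat; lra).
  assert (Hv: 0 < u * e / (m+1)) by (apply Rdiv_lt_0_compat; nra).
  replace u with ((u * e / (m+1)) * ((m+1)/e)) at 1 by (field; lra).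
  rewrite ln_mult by auto.
  pose proof (ln_le_sub1 _ Hv).
  assert (m * (u * e / (m + 1)) <= e * u).
  { apply Rmult_le_reg_r with (m+1). lra. unfold Rdiv.
    replace (m * (u * e * / (m + 1)) * (m + 1)) with (m * (u * e)) by (field; lra). nra. }
  nra.
Qed.

Lemma A_summable p B j r : 0 < p -> 1 < B -> 0 <= r ->
  ex_series (fun n => (Rpower (INR (S n) / B ^ j) (2 * p) * exp (- (INR (S n) / B ^ j) ^ 2)) ^ 2
                      * (2 * INR (S n) + 1) * Rpower (INR (S n)) r).
Proof.
  intros Hp HB Hr.
  set (h := / B ^ j). assert (Hh: 0 < h) by (apply Rinv_0_lt_compat, pow_lt; lra).
  set (m := 4 * p + 1 + r).
  set (K := 3 * Rpower h (4 * p) * Rpower ((m + 1) / h ^ 2) m).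
  assert (Hh2: 0 < h ^ 2) by (apply pow_lt; auto).
  apply (ex_series_le (K:=R_AbsRing) (V:=R_CompleteNormedModule) _ (fun n => K * exp (- h ^ 2) ^ (S n))).
  - intros n. rewrite norm_R. set (l := INR (S n)).
    assert (Hl: 1 <= l) by (unfold l; rewrite S_INR; pose proof (pos_INR n); lra).
    replace (l / B ^ j) with (l * h) by (unfold h; field; apply pow_nonzero; lra).
    rewrite Rabs_right.
    2:{ apply Rle_ge. apply Rmult_le_pos. apply Rmult_le_pos. apply pow2_ge_0. lra. left; apply Rpower_pos. }
    rewrite <- Rpower_mult_distr by lra.
    rewrite exp_pow_n. change (INR (S n)) with l.
    assert (E1: (Rpower l (2 * p) * Rpower h (2 * p) * exp (- (l * h) ^ 2)) ^ 2 =
                Rpower l (4 * p) * Rpower h (4 * p) * exp (- 2 * h ^ 2 * l ^ 2)).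
    { unfold Rpower. rewrite <- !exp_plus, exp_pow_n. f_equal. simpl. ring. }
    rewrite E1.
    assert (E2: exp (- 2 * h ^ 2 * l ^ 2) <= exp (- 2 * h ^ 2 * l)).
    { apply exp_le_mono. assert (l <= l^2) by nra. nra. }
    assert (E3: 2 * l + 1 <= 3 * Rpower l 1) by (rewrite Rpower_1; lra).
    pose proof (pow_exp_bound m (h^2) l ltac:(unfold m; lra) Hh2 ltac:(lra)) as E4.
    assert (E5: Rpower l (4 * p) * Rpower l 1 * Rpower l r = Rpower l m).
    { unfold m. rewrite <- !Rpower_plus. reflexivity. }
    apply Rle_trans with (Rpower h (4 * p) * exp (- 2 * h ^ 2 * l) * 3 * (Rpower l (4 * p) * Rpower l 1 * Rpower l r)).
    { pose proof (Rpower_pos l (4*p)). pose proof (Rpower_pos h (4*p)). pose proof (Rpower_pos l r).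
      pose proof (exp_pos (- 2 * h ^ 2 * l ^ 2)). pose proof (Rpower_pos l 1).
      assert (Rpower l (4 * p) * Rpower h (4 * p) * exp (- 2 * h ^ 2 * l ^ 2) * (2 * l + 1)
              <= Rpower l (4 * p) * Rpower h (4 * p) * exp (- 2 * h ^ 2 * l) * (3 * Rpower l 1)).
      { apply Rmult_le_compat.
        - apply Rmult_le_pos; [apply Rmult_le_pos|]; lra.
        - lra.
        - apply Rmult_le_compat_l; [apply Rmult_le_pos; lra|exact E2].
        - exact E3. }
      replace (Rpower h (4 * p) * exp (- 2 * h ^ 2 * l) * 3 * (Rpower l (4 * p) * Rpower l 1 * Rpower l r))
        with (Rpower l (4 * p) * Rpower h (4 * p) * exp (- 2 * h ^ 2 * l) * (3 * Rpower l 1) * Rpower l r) by ring.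
      apply Rmult_le_compat_r; lra. }
    rewrite E5.
    apply Rle_trans with (Rpower h (4 * p) * exp (- 2 * h ^ 2 * l) * 3 * (Rpower ((m + 1) / h ^ 2) m * exp (h ^ 2 * l))).
    { apply Rmult_le_compat_l; auto. pose proof (Rpower_pos h (4*p)). pose proof (exp_pos (- 2 * h ^ 2 * l)). nra. }
    unfold K. replace (l * - h ^ 2) with (- 2 * h ^ 2 * l + h ^ 2 * l) by ring.
    rewrite exp_plus. right. ring.
  - apply (ex_series_scal_l (K:=R_AbsRing) (V:=R_CompleteNormedModule) K).
    apply (ex_series_ext (fun n => exp (- h ^ 2) * exp (- h ^ 2) ^ n)).
    intros n. simpl. reflexivity.
    apply (ex_series_scal_l (K:=R_AbsRing) (V:=R_CompleteNormedModule) (exp (- h ^ 2))).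
    apply ex_series_geom. rewrite Rabs_right by (left; apply exp_pos).
    rewrite <- exp_0. apply exp_increasing. lra.
Qed.

Definition hh (B : R) (j : nat) := / B ^ j.
Definition Aj p B j n := (fp p (INR (S n) / B ^ j)) ^ 2 * (2 * INR (S n) + 1).
Definition ww a B s j n := 2 * (hh B j * phi a s (INR (S n) * hh B j)) + hh B j * phi a s (INR (S n) * hh B j) / INR (S n).

Lemma KM_Tk B p cB j al : KM B p cB j al = / Nj B cB j * Tk (Aj p B j) 0 al.
Proof.
  unfold KM, Tk. f_equal. apply Series_ext. intros n. cbv zeta. unfold Aj. rewrite pow_O. ring.
Qed.

Lemma Aj_nonneg p B j n : 0 <= Aj p B j n.
Proof. unfold Aj. apply Rmult_le_pos. apply pow2_ge_0. rewrite S_INR; pose proof (pos_INR n); lra. Qed.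

Lemma Aj_summable p B j : 0 < p -> 1 < B -> forall r, 0 <= r -> ex_series (fun n => Aj p B j n * Rpower (INR (S n)) r).
Proof. intros Hp HB r Hr. apply (A_summable p B j r); auto. Qed.

Lemma hh_pos B j : 1 < B -> 0 < hh B j.
Proof. intros HB. unfold hh. apply Rinv_0_lt_compat, pow_lt; lra. Qed.

Lemma ln_hh B j : 1 < B -> ln (hh B j) = - (INR j * ln B).
Proof. intros HB. unfold hh. rewrite ln_Rinv, ln_pow by (try apply pow_lt; lra). reflexivity. Qed.

Lemma term_id p B j al n : 1 < B ->
  Aj p B j n * Rpower (INR (S n)) (- al) =
  B ^ (2 * j) * Rpower B (- al * INR j) * ww (4 * p + 1 - al) B 0 j n.
Proof.
  intros HB. pose proof (hh_pos B j HB) as Hh. set (h := hh B j) in *.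
  set (l := INR (S n)). assert (Hl: 0 < l) by (apply lt_0_INR; lia).
  set (u := l * h). assert (Hu: 0 < u) by (unfold u; nra).
  assert (F0: l / B ^ j = u) by (unfold u, h, hh; reflexivity).
  assert (F1: Rpower l (- al) = Rpower u (- al) * Rpower h al).
  { unfold u, Rpower. rewrite ln_mult by auto. rewrite <- exp_plus. f_equal.
    replace (ln l) with (ln l + ln h - ln h) at 1 by ring. ring. }
  assert (F2: Rpower u (4 * p + 1 - al) = Rpower u (2 * p) ^ 2 * u * Rpower u (- al)).
  { replace (4 * p + 1 - al) with (2 * p + (2 * p + (1 + - al))) by ring.
    rewrite !Rpower_plus, Rpower_1 by auto. ring. }
  assert (F3: exp (- 2 * u ^ 2) = exp (- u ^ 2) ^ 2).
  { rewrite exp_pow_n. f_equal. simpl. ring. }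
  assert (F4: Rpower B (- al * INR j) = Rpower h al).
  { unfold Rpower. unfold h. rewrite ln_hh by auto. f_equal. ring. }
  assert (F5: B ^ (2 * j) = / h ^ 2).
  { unfold h, hh. rewrite pow_inv, Rinv_inv, pow_mult. rewrite <- pow_mult, <- pow_mult. f_equal. lia. }
  unfold Aj, ww, fp, phi. fold h. fold l. fold u. rewrite F0, F1, F2, F3, F4, F5.
  simpl (ln u ^ 0). match goal with |- ?x = ?y => change (x = y :> R) end. unfold u. field. split; lra.
Qed.

Lemma ln_split B j n : 1 < B -> ln (INR (S n)) = ln (INR (S n) * hh B j) + INR j * ln B.
Proof.
  intros HB. rewrite ln_mult, ln_hh by (auto; try apply hh_pos; auto; apply lt_0_INR; lia). ring.
Qed.

Lemma ww_s a B s j n : ww a B s j n = ww a B 0 j n * ln (INR (S n) * hh B j) ^ s.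
Proof. unfold ww, phi. rewrite pow_O. field. apply not_0_INR. lia. Qed.

Lemma is_series_sc (a : nat -> R) la c : is_series a la -> is_series (fun n => c * a n) (c * la).
Proof. intros H. apply (is_series_scal (K:=R_AbsRing) (V:=R_NormedModule) c a la H). Qed.

Lemma is_series_pl (a b : nat -> R) la lb : is_series a la -> is_series b lb -> is_series (fun n => a n + b n) (la + lb).
Proof. intros H1 H2. apply (is_series_plus (K:=R_AbsRing) (V:=R_NormedModule) a b la lb H1 H2). Qed.

Lemma Tk_vals p B j al G0 G1 G2 : 1 < B ->
  is_series (ww (4 * p + 1 - al) B 0 j) G0 -> is_series (ww (4 * p + 1 - al) B 1 j) G1 ->
  is_series (ww (4 * p + 1 - al) B 2 j) G2 ->
  Tk (Aj p B j) 0 al = B ^ (2 * j) * Rpower B (- al * INR j) * G0 /\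
  Tk (Aj p B j) 1 al = B ^ (2 * j) * Rpower B (- al * INR j) * (G1 + INR j * ln B * G0) /\
  Tk (Aj p B j) 2 al = B ^ (2 * j) * Rpower B (- al * INR j) * (G2 + 2 * (INR j * ln B) * G1 + (INR j * ln B) ^ 2 * G0).
Proof.
  intros HB H0 H1 H2. set (W := B ^ (2 * j) * Rpower B (- al * INR j)). set (J := INR j * ln B).
  set (a := 4 * p + 1 - al) in *.
  assert (Hterm: forall n k, Aj p B j n * ln (INR (S n)) ^ k * Rpower (INR (S n)) (- al) =
      W * (ww a B 0 j n * (ln (INR (S n) * hh B j) + J) ^ k)).
  { intros n k. rewrite <- ln_split by auto.
    replace (Aj p B j n * ln (INR (S n)) ^ k * Rpower (INR (S n)) (- al)) with
      ((Aj p B j n * Rpower (INR (S n)) (- al)) * ln (INR (S n)) ^ k) by ring.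
    rewrite term_id by auto. fold W. unfold a. ring. }
  unfold Tk. split; [|split]; apply is_series_unique.
  - eapply is_series_ext; [|apply (is_series_sc _ _ W H0)].
    intros n. rewrite Hterm. simpl. ring.
  - eapply is_series_ext; [|apply (is_series_sc _ _ W (is_series_pl _ _ _ _ H1 (is_series_sc _ _ J H0)))].
    intros n. rewrite Hterm. rewrite (ww_s a B 1 j n). simpl. ring.
  - eapply is_series_ext; [|apply (is_series_sc _ _ W (is_series_pl _ _ _ _ (is_series_pl _ _ _ _ H2 (is_series_sc _ _ (2 * J) H1)) (is_series_sc _ _ (J ^ 2) H0)))].
    intros n. rewrite Hterm. rewrite (ww_s a B 1 j n), (ww_s a B 2 j n). simpl. ring.
Qed.

Lemma KM_derive1 B p cB j al : 0 < p -> 1 < B ->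
  is_derive (fun a => KM B p cB j a) al (/ Nj B cB j * - Tk (Aj p B j) 1 al).
Proof.
  intros Hp HB. eapply is_derive_ext. intros t; symmetry; apply KM_Tk.
  apply is_derive_scal. apply Tk_derive. intros; apply Aj_nonneg. apply Aj_summable; auto.
Qed.

Lemma Derive_KM B p cB j : 0 < p -> 1 < B -> forall al,
  Derive (fun a => KM B p cB j a) al = / Nj B cB j * - Tk (Aj p B j) 1 al.
Proof. intros Hp HB al. apply is_derive_unique. apply KM_derive1; auto. Qed.

Lemma KM_derive2 B p cB j al : 0 < p -> 1 < B ->
  is_derive (Derive (fun a => KM B p cB j a)) al (/ Nj B cB j * Tk (Aj p B j) 2 al).
Proof.
  intros Hp HB. eapply is_derive_ext. intros t; symmetry; apply Derive_KM; auto.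
  replace (/ Nj B cB j * Tk (Aj p B j) 2 al) with (/ Nj B cB j * - (- Tk (Aj p B j) 2 al)) by ring.
  apply is_derive_scal. apply (is_derive_opp (fun t => Tk (Aj p B j) 1 t)).
  apply Tk_derive. intros; apply Aj_nonneg. apply Aj_summable; auto.
Qed.

Lemma phi_riemann a s : -1 < a -> exists I K g, 0 < g /\ 0 <= K /\
  is_RInt_gen (phi a s) (at_right 0) (Rbar_locally p_infty) I /\
  forall h, 0 < h -> exists Sv Ev, is_series (fun n => h * phi a s (INR (S n) * h)) Sv /\
    is_series (fun n => h * phi a s (INR (S n) * h) / INR (S n)) Ev /\
    Rabs (Sv - I) <= K * Rpower h g /\ Rabs Ev <= K * Rpower h g.
Proof.
  intros Ha. destruct (phi_bounds a s Ha) as [C [b [Hb [HC [G Hd]]]]].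
  destruct (exist_gen (phi a s) C b G Hb HC) as [I [HI HIb]].
  exists I, (C * (2 - / b + / (b+1))), (b + 1). split. lra. split.
  { apply Rmult_le_pos; auto. assert (0 < / (b+1)) by (apply Rinv_0_lt_compat; lra).
    assert (0 < - / b) by (rewrite <- Rinv_opp; apply Rinv_0_lt_compat; lra). lra. }
  split; auto. intros h Hh.
  destruct (riemann (phi a s) (dphi a s) C b I h G Hb HC (is_derive_phi a s) Hd HIb Hh) as [Sv [Ev [H1 [H2 [H3 H4]]]]].
  exists Sv, Ev. split; auto. split; auto. split; auto.
  eapply Rle_trans. exact H4. apply Rmult_le_compat_r. left; apply Rpower_pos.
  apply Rmult_le_compat_l; auto. assert (0 < / (b+1)) by (apply Rinv_0_lt_compat; lra). lra.
Qed.

Lemma G_lemma a B s : -1 < a -> 1 < B -> exists I K q, 0 < q < 1 /\ 0 <= K /\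
  is_RInt_gen (phi a s) (at_right 0) (Rbar_locally p_infty) I /\
  forall j, is_series (ww a B s j) (Series (ww a B s j)) /\ Rabs (Series (ww a B s j) - 2 * I) <= K * q ^ j.
Proof.
  intros Ha HB. destruct (phi_riemann a s Ha) as [I [K [g [Hg [HK [HI HR]]]]]].
  exists I, (3 * K), (Rpower B (- g)). split.
  { split. apply Rpower_pos. rewrite <- (Rpower_O B) by lra. apply Rpower_lt; lra. }
  split. lra. split; auto. intros j.
  destruct (HR (hh B j) (hh_pos B j HB)) as [Sv [Ev [H1 [H2 [H3 H4]]]]].
  assert (Hs: is_series (ww a B s j) (2 * Sv + Ev)).
  { eapply is_series_ext; [|apply (is_series_pl _ _ _ _ (is_series_sc _ _ 2 H1) H2)].
    intros n. unfold ww. reflexivity. }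
  rewrite (is_series_unique _ _ Hs). split; auto.
  assert (Rpower (hh B j) g = Rpower B (- g) ^ j).
  { unfold Rpower at 1. rewrite ln_hh by auto. unfold Rpower. rewrite exp_pow_n. f_equal. ring. }
  rewrite <- H.
  replace (2 * Sv + Ev - 2 * I) with (2 * (Sv - I) + Ev) by ring.
  eapply Rle_trans. apply Rabs_triang. rewrite Rabs_mult, (Rabs_right 2) by lra. lra.
Qed.

Lemma G_lims (G : nat -> R) I K q : 0 < q < 1 -> (forall j, Rabs (G j - 2 * I) <= K * q ^ j) ->
  is_lim_seq G (2 * I) /\ is_lim_seq (fun j => INR j * (G j - 2 * I)) 0.
Proof.
  intros Hq HG. split.
  - assert (is_lim_seq (fun j => G j - 2 * I) 0).
    { apply (squeeze0 _ (fun j => K * q ^ j)); auto.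
      pose proof (is_lim_seq_scal_l _ K 0 (is_lim_seq_geom q ltac:(rewrite Rabs_right; lra))).
      simpl in H. rewrite Rmult_0_r in H. exact H. }
    pose proof (is_lim_seq_plus' _ _ _ _ H (is_lim_seq_const (2 * I))).
    rewrite Rplus_0_l in H0. eapply is_lim_seq_ext; [|exact H0]. intros n; simpl; ring.
  - apply (squeeze0 _ (fun j => K * (INR j * q ^ j))).
    + intros j. rewrite Rabs_mult, Rabs_right by (apply Rle_ge, pos_INR).
      specialize (HG j). pose proof (pos_INR j). nra.
    + pose proof (is_lim_seq_scal_l _ K 0 (jqj q Hq)). simpl in H. rewrite Rmult_0_r in H. exact H.
Qed.

Lemma series_pos (a : nat -> R) l : is_series a l -> (forall n, 0 <= a n) -> 0 < a 0%nat -> 0 < l.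
Proof.
  intros H Hp H0. apply ps_is_series in H. apply is_lim_seq_incr_1 in H.
  assert (Hb: forall N, a 0%nat <= ps a (S N)).
  { induction N. simpl. lra. change (ps a (S (S N))) with (ps a (S N) + a (S N)). specialize (Hp (S N)). lra. }
  pose proof (is_lim_seq_le _ _ _ _ Hb (is_lim_seq_const (a 0%nat)) H). simpl in H1. lra.
Qed.

Lemma ww0_pos a B j n : 1 < B -> 0 < ww a B 0 j n.
Proof.
  intros HB. unfold ww, phi. pose proof (hh_pos B j HB). pose proof (lt_0_INR (S n) ltac:(lia)).
  set (X := Rpower (INR (S n) * hh B j) a * exp (- 2 * (INR (S n) * hh B j) ^ 2) * ln (INR (S n) * hh B j) ^ 0).
  assert (0 < X) by (unfold X; rewrite pow_O, Rmult_1_r; apply Rmult_lt_0_compat; [apply Rpower_pos|apply exp_pos]).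
  assert (0 < hh B j * X / INR (S n)) by (apply Rdiv_lt_0_compat; nra). nra.
Qed.

Ltac rring := match goal with |- ?u = ?v => change (u = v :> R) end; ring.

Theorem proposition20 (B p cB alpha : R)
  (hB : 1 < B) (hp : 0 < p) (hcB : 0 < cB) (halpha : 0 < 4 * p + 2 - alpha) :
  Ips p cB 0 alpha
    = Rpower 2 (- (2 * p - alpha / 2 + 1)) / cB * Gamma (2 * p + 1 - alpha / 2)
  /\ (exists eps : nat -> R, is_lim_seq eps 0 /\
        forall j : nat,
          KM B p cB j alpha = (Ips p cB 0 alpha + eps j) * Rpower B (- alpha * INR j))
  /\ (forall j : nat, ex_derive (fun a => KM B p cB j a) alpha)
  /\ (exists eps : nat -> R, is_lim_seq eps 0 /\
        forall j : nat,
          Derive (fun a => KM B p cB j a) alpha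
          = - (INR j * ln B + Ips p cB 1 alpha / Ips p cB 0 alpha + eps j)
              * KM B p cB j alpha)
  /\ (forall j : nat, ex_derive (Derive (fun a => KM B p cB j a)) alpha)
  /\ (exists eps : nat -> R, is_lim_seq eps 0 /\
        forall j : nat,
          Derive (Derive (fun a => KM B p cB j a)) alpha
          = (INR j ^ 2 * (ln B) ^ 2
             + 2 * INR j * ln B * (Ips p cB 1 alpha / Ips p cB 0 alpha)
             + Ips p cB 2 alpha / Ips p cB 0 alpha + eps j)
              * KM B p cB j alpha).
Proof.
  set (a := 4 * p + 1 - alpha). assert (Ha: -1 < a) by (unfold a; lra).
  destruct (G_lemma a B 0 Ha hB) as [I0 [K0 [q0 [Hq0 [HK0 [HI0 HG0]]]]]].
  destruct (G_lemma a B 1 Ha hB) as [I1 [K1 [q1 [Hq1 [HK1 [HI1 HG1]]]]]].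
  destruct (G_lemma a B 2 Ha hB) as [I2 [K2 [q2 [Hq2 [HK2 [HI2 HG2]]]]]].
  assert (E0: Ips p cB 0 alpha = 2 / cB * I0) by (unfold Ips; f_equal; apply is_RInt_gen_unique; exact HI0).
  assert (E1: Ips p cB 1 alpha = 2 / cB * I1) by (unfold Ips; f_equal; apply is_RInt_gen_unique; exact HI1).
  assert (E2: Ips p cB 2 alpha = 2 / cB * I2) by (unfold Ips; f_equal; apply is_RInt_gen_unique; exact HI2).
  assert (HI0p: 0 < I0) by (apply (I0_pos a); auto).
  set (G := fun s j => Series (ww a B s j)).
  assert (Gpos: forall j, 0 < G 0%nat j).
  { intros j. apply (series_pos (ww a B 0 j)). apply HG0. intros n; left; apply ww0_pos; auto. apply ww0_pos; auto. }
  assert (Tv: forall j, Tk (Aj p B j) 0 alpha = B ^ (2 * j) * Rpower B (- alpha * INR j) * G 0%nat j /\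
     Tk (Aj p B j) 1 alpha = B ^ (2 * j) * Rpower B (- alpha * INR j) * (G 1%nat j + INR j * ln B * G 0%nat j) /\
     Tk (Aj p B j) 2 alpha = B ^ (2 * j) * Rpower B (- alpha * INR j) * (G 2%nat j + 2 * (INR j * ln B) * G 1%nat j + (INR j * ln B) ^ 2 * G 0%nat j)).
  { intros j. apply Tk_vals; auto. apply HG0. apply HG1. apply HG2. }
  assert (HBj: forall j, 0 < B ^ (2 * j)) by (intros; apply pow_lt; lra).
  assert (KMv: forall j, KM B p cB j alpha = Rpower B (- alpha * INR j) / cB * G 0%nat j).
  { intros j. rewrite KM_Tk. destruct (Tv j) as [T0 _]. rewrite T0. unfold Nj.
    specialize (HBj j). field. lra. }
  destruct (G_lims (G 0%nat) I0 K0 q0 Hq0 (fun j => proj2 (HG0 j))) as [L0 L0'].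
  destruct (G_lims (G 1%nat) I1 K1 q1 Hq1 (fun j => proj2 (HG1 j))) as [L1 L1'].
  destruct (G_lims (G 2%nat) I2 K2 q2 Hq2 (fun j => proj2 (HG2 j))) as [L2 L2'].
  assert (Hr1: is_lim_seq (fun j => G 1%nat j / G 0%nat j - Ips p cB 1 alpha / Ips p cB 0 alpha) 0).
  { pose proof (is_lim_seq_div' _ _ _ _ L1 L0 ltac:(lra)) as H.
    pose proof (is_lim_seq_minus' _ _ _ _ H (is_lim_seq_const (Ips p cB 1 alpha / Ips p cB 0 alpha))) as H'.
    replace (2 * I1 / (2 * I0) - Ips p cB 1 alpha / Ips p cB 0 alpha) with 0 in H'.
    exact H'. rewrite E0, E1. field. split; lra. }
  assert (Hr2: is_lim_seq (fun j => G 2%nat j / G 0%nat j - Ips p cB 2 alpha / Ips p cB 0 alpha) 0).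
  { pose proof (is_lim_seq_div' _ _ _ _ L2 L0 ltac:(lra)) as H.
    pose proof (is_lim_seq_minus' _ _ _ _ H (is_lim_seq_const (Ips p cB 2 alpha / Ips p cB 0 alpha))) as H'.
    replace (2 * I2 / (2 * I0) - Ips p cB 2 alpha / Ips p cB 0 alpha) with 0 in H'.
    exact H'. rewrite E0, E2. field. split; lra. }
  split; [|split; [|split; [|split; [|split]]]].
  -
    set (x := 2 * p + 1 - alpha / 2).
    assert (HI0': is_RInt_gen (phi (2 * x - 1) 0) (at_right 0) (Rbar_locally p_infty) I0).
    { assert (Hx: 2 * x - 1 = a) by (unfold x, a; lra). rewrite Hx. exact HI0. }
    pose proof (gamma_gen x I0 HI0') as HG.
    assert (Gx: Gamma x = Rpower 2 (x + 1) * I0) by (unfold Gamma; apply is_RInt_gen_unique; exact HG).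
    rewrite Gx, E0.
    replace (Rpower 2 (- (2 * p - alpha / 2 + 1)) / cB * (Rpower 2 (x + 1) * I0)) with
      ((Rpower 2 (- (2 * p - alpha / 2 + 1)) * Rpower 2 (x + 1)) / cB * I0) by (field; lra).
    rewrite <- Rpower_plus. replace (- (2 * p - alpha / 2 + 1) + (x + 1)) with 1 by (unfold x; lra).
    rewrite Rpower_1 by lra. reflexivity.
  - exists (fun j => G 0%nat j / cB - Ips p cB 0 alpha). split.
    + rewrite E0. pose proof (is_lim_seq_minus' _ _ _ _ L0 (is_lim_seq_const (2 * I0))) as H.
      pose proof (is_lim_seq_div' _ _ _ _ H (is_lim_seq_const cB) ltac:(lra)) as H'.
      replace ((2 * I0 - 2 * I0) / cB) with 0 in H' by (field; lra).
      eapply is_lim_seq_ext; [|exact H']. intros j. simpl. field. lra.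
    + intros j. rewrite KMv. field. lra.
  - intros j. eexists. apply KM_derive1; auto.
  - exists (fun j => G 1%nat j / G 0%nat j - Ips p cB 1 alpha / Ips p cB 0 alpha). split; auto.
    intros j. rewrite Derive_KM by auto. rewrite KMv. destruct (Tv j) as [_ [T1 _]]. rewrite T1.
    unfold Nj. specialize (HBj j). specialize (Gpos j). rewrite E0, E1. field. repeat split; lra.
  - intros j. eexists. apply KM_derive2; auto.
  - exists (fun j => G 2%nat j / G 0%nat j - Ips p cB 2 alpha / Ips p cB 0 alpha +
                     2 * (INR j * ln B) * (G 1%nat j / G 0%nat j - Ips p cB 1 alpha / Ips p cB 0 alpha)).
    split.
    + replace 0 with (0 + 0) by ring. apply is_lim_seq_plus'; auto.
      assert (Hn: is_lim_seq (fun j => 2 * ln B * ((INR j * (G 1%nat j - 2 * I1)) * I0 - I1 * (INR j * (G 0%nat j - 2 * I0))) / (G 0%nat j * I0)) 0).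
      { pose proof (is_lim_seq_mult' _ _ _ _ L1' (is_lim_seq_const I0)) as A1.
        pose proof (is_lim_seq_mult' _ _ _ _ (is_lim_seq_const I1) L0') as A2.
        pose proof (is_lim_seq_minus' _ _ _ _ A1 A2) as A3.
        pose proof (is_lim_seq_scal_l _ (2 * ln B) _ A3) as A4. simpl in A4.
        pose proof (is_lim_seq_mult' _ _ _ _ L0 (is_lim_seq_const I0)) as A5.
        pose proof (is_lim_seq_div' _ _ _ _ A4 A5 ltac:(nra)) as A6.
        replace (2 * ln B * (0 * I0 - I1 * 0) / (2 * I0 * I0)) with 0 in A6 by (field; lra).
        exact A6. }
      eapply is_lim_seq_ext; [|exact Hn]. intros j. simpl. specialize (Gpos j).
      rewrite E0, E1. field. split; lra.
    + intros j. assert (HD: Derive (Derive (fun a0 => KM B p cB j a0)) alpha = / Nj B cB j * Tk (Aj p B j) 2 alpha).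
      { apply is_derive_unique. apply KM_derive2; auto. }
      rewrite HD, KMv. destruct (Tv j) as [_ [_ T2]]. rewrite T2.
      unfold Nj. specialize (HBj j). specialize (Gpos j). rewrite E0, E1, E2. field. repeat split; lra.
Qed.
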